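(* Let $\mathbb{F}\subseteq\mathbb{C}$ be a subfield closed under complex conjugation, $m\ge2$, $N\ge1$, and let $\zeta_1,\dots,\zeta_{m-1}\in\mathcal{P}_N^-[\mathbb{F}]$. If $\mathbf{u}(z)=(u_1,\dots,u_{m-1},\widetilde{u_m})^T$ and $\mathbf{v}(z)=(v_1,\dots,v_{m-1},\widetilde{v_m})^T$, with $u_i,v_i\in\mathcal{P}_N^+[\mathbb{F}]$, are two solutions of the system $(\mathcal{S})$ and $\mathbf{u}(1)=\mathbf{v}(1)$, then $\mathbf{u}(z)=\mathbf{v}(z)$ for every $z\in\mathbb{C}\setminus\{0\}$. In particular, if a solution $\mathbf{u}$ satisfies $\mathbf{u}(1)=0\in\mathbb{F}^m$, then $\mathbf{u}(z)=0$ for all $z\in\mathbb{C}\setminus\{0\}$.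
   Context: For a Laurent polynomial $p(z)=\sum_k c_kz^k$ write $\widetilde{p}(z)=\sum_k\overline{c_k}z^{-k}$. $\mathcal{P}_N^+[\mathbb{F}]=\{\sum_{k=0}^Nc_kz^k: c_k\in\mathbb{F}\}$, $\mathcal{P}_N^-[\mathbb{F}]=\{\sum_{k=1}^Nc_kz^{-k}: c_k\in\mathbb{F}\}$. Let $\mathcal{P}^+$ denote the set of polynomials in $z$ (Laurent polynomials with no negative powers). The system $(\mathcal{S})$ in unknowns $x_1,\dots,x_m$ is $$\zeta_i(z)x_m(z)-\widetilde{x_i}(z)\in\mathcal{P}^+\ (i=1,\dots,m-1),\qquad \sum_{i=1}^{m-1}\zeta_i(z)x_i(z)+\widetilde{x_m}(z)\in\mathcal{P}^+.$$ A vector $(u_1,\dots,u_{m-1},\widetilde{u_m})^T$ with $u_i\in\mathcal{P}_N^+[\mathbb{F}]$ is called a solution of $(\mathcal{S})$ if all these conditions hold with $x_i=u_i$, $i=1,\dots,m$. *)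

(* Defs.v *)
From HB Require Import structures.
From mathcomp Require Import all_boot all_order all_algebra.
From mathcomp Require Import complex.
From mathcomp Require Import reals.
Set Implicit Arguments. Unset Strict Implicit. Unset Printing Implicit Defensive.
Import Order.TTheory GRing.Theory Num.Theory.
Local Open Scope ring_scope.

Section Laurent.
Variable C : fieldType.
Variable conj : C -> C.

(* A Laurent polynomial  z^{-lsh} * lp(z). *)
Record laurent := Laurent { lp : {poly C}; lsh : nat }.

Definition lcoef (L : laurent) (k : int) : C :=
  match (k + (lsh L)%:Z)%R with Posz n => (lp L)`_n | Negz _ => 0 end.

Definition lpoly (p : {poly C}) : laurent := Laurent p 0.
Definition ladd (L M : laurent) : laurent :=
  Laurent (lp L * 'X^(lsh M) + lp M * 'X^(lsh L)) (lsh L + lsh M).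
Definition lopp (L : laurent) : laurent := Laurent (- lp L) (lsh L).
Definition lsub (L M : laurent) : laurent := ladd L (lopp M).
Definition lmul (L M : laurent) : laurent := Laurent (lp L * lp M) (lsh L + lsh M).
Definition lzero : laurent := lpoly 0.

(* tilde: sum_k c_k z^k  |->  sum_k conj(c_k) z^{-k} *)
Definition ltilde (L : laurent) : laurent :=
  let p := lp L in let d := (size p).-1 in
  Laurent ((\poly_(j < size p) conj (p`_(d - j))) * 'X^(lsh L)) d.

Definition leval (L : laurent) (z : C) : C := (lp L).[z] / z ^+ lsh L.

Definition in_Pplus (L : laurent) : Prop := forall k : int, k < 0 -> lcoef L k = 0.

Definition in_PNplus (F : {pred C}) (N : nat) (p : {poly C}) : Prop :=
  (size p <= N.+1)%N /\ forall j, p`_j \in F.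

Definition in_PNminus (F : {pred C}) (N : nat) (L : laurent) : Prop :=
  (forall k, lcoef L k \in F) /\
  (forall k : int, (0 <= k \/ k < - (N%:Z)) -> lcoef L k = 0).

(* Solution of (S): zeta_1..zeta_{m-1}, u_1..u_m (1-based indices). *)
Definition is_solution (F : {pred C}) (N m : nat) (zeta : nat -> laurent)
    (u : nat -> {poly C}) : Prop :=
  (forall i, (1 <= i <= m)%N -> in_PNplus F N (u i)) /\
  (forall i, (1 <= i < m)%N ->
     in_Pplus (lsub (lmul (zeta i) (lpoly (u m))) (ltilde (lpoly (u i))))) /\
  in_Pplus (ladd (foldr ladd lzero
                    [seq lmul (zeta i) (lpoly (u i)) | i <- iota 1 m.-1])
                 (ltilde (lpoly (u m)))).

Definition solvec (m : nat) (u : nat -> {poly C}) (z : C) : 'cV[C]_m :=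
  \col_(i < m) (if (i.+1 < m)%N then (u i.+1).[z]
                else leval (ltilde (lpoly (u m))) z).
End Laurent.

(* Main.v *)
Require Import Defs.
From HB Require Import structures.
From mathcomp Require Import all_boot all_order all_algebra.
From mathcomp Require Import complex.
From mathcomp Require Import reals.
From mathcomp Require Import zify ring.
Import Order.TTheory GRing.Theory Num.Theory.
Local Open Scope ring_scope.

Lemma Pplus_dvd {C : fieldType} {L : laurent C} :
  in_Pplus L -> 'X^(lsh L) %| lp L.
Proof.
move=> H; rewrite -(poly_take_drop (lsh L) (lp L)).
have -> : take_poly (lsh L) (lp L) = 0.
  apply/polyP => n; rewrite coef_take_poly coef0; case: ifP => // hn.
  have := H (n%:Z - (lsh L)%:Z).
  rewrite /lcoef subrK => -> //.
  by rewrite subr_lt0 ltz_nat.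
by rewrite add0r dvdp_mull.
Qed.

Definition revN {R : realType} (N : nat) (p : {poly R[i]}) : {poly R[i]} :=
  \sum_(b < N.+1) conjc p`_b *: 'X^(N - b).

Lemma coef_revN {R : realType} {N : nat} {p : {poly R[i]}} (n : nat) :
  (revN N p)`_n = if (n <= N)%N then conjc p`_(N - n) else 0.
Proof.
rewrite /revN coef_sum.
under eq_bigr => b _ do rewrite coefZ coefXn.
case: leqP => hn.
  rewrite (bigD1 (inord (N - n))) //= inordK; last lia.
  rewrite big1 ?addr0.
    by rewrite (_ : n == N - (N - n))%N ?mulr1 //; apply/eqP; lia.
  move=> b hb; case: eqP => h; last by rewrite mulr0.
  have := ltn_ord b; move=> hb2; exfalso; move/eqP: hb; apply; apply/val_inj => /=; rewrite inordK; last lia.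
  by move: b h hb2 => [b hb3] /= *; lia.
rewrite big1 // => b _; case: eqP => h; last by rewrite mulr0.
have := ltn_ord b; lia.
Qed.

Lemma tilde_rev {R : realType} {N : nat} {p : {poly R[i]}} :
  (size p <= N.+1)%N ->
  lp (ltilde (@conjc R) (lpoly p)) * 'X^(N - (size p).-1) = revN N p.
Proof.
move=> hp; apply/polyP => n.
rewrite coefMXn coef_revN /ltilde /= expr0 mulr1 coef_poly.
move: hp; case hs: (size p) => [|d] hp /=.
  rewrite if_same; case: ifP => // hn.
  by rewrite nth_default ?conjc0 // hs.
case: ltnP => h1.
  rewrite ifT; last lia.
  by rewrite nth_default ?conjc0 // hs; lia.
case: ltnP => h2.
  rewrite ifT; last lia.
  congr (_ ^*)%C; congr (p`_ _); lia.
rewrite ifF //; apply/negbTE; rewrite -ltnNge; lia.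
Qed.

Lemma horner_revN1 {R : realType} {N : nat} {p : {poly R[i]}} :
  (size p <= N.+1)%N -> (revN N p).[1] = conjc p.[1].
Proof.
move=> hp; rewrite /revN horner_sum (horner_coef_wide _ hp) rmorph_sum.
apply: eq_bigr => b _; by rewrite hornerZ hornerXn !expr1n !mulr1.
Qed.

Lemma leval_tilde1 {R : realType} {N : nat} {p : {poly R[i]}} :
  (size p <= N.+1)%N -> leval (ltilde (@conjc R) (lpoly p)) 1 = conjc p.[1].
Proof.
move=> hp; rewrite /leval expr1n divr1 -(horner_revN1 hp) -(tilde_rev hp).
by rewrite !hornerM !hornerXn !expr1n !mulr1.
Qed.

Lemma poly_expand {C : fieldType} (p : {poly C}) n :
  (size p <= n)%N -> p = \sum_(a < n) p`_a *: 'X^a.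
Proof.
move=> hp; rewrite -poly_def; apply/polyP => k; rewrite coef_poly.
case: ltnP => // h; rewrite nth_default //; exact: leq_trans hp h.
Qed.

Lemma mem_le_sum (l : seq nat) (f : nat -> nat) j :
  j \in l -> (f j <= \sum_(i <- l) f i)%N.
Proof.
elim: l => // a l IH; rewrite in_cons big_cons => /orP [/eqP ->|h].
  exact: leq_addr.
exact: leq_trans (IH h) (leq_addl _ _).
Qed.

Lemma foldr_lap {C : fieldType} (zeta : nat -> laurent C) (u : nat -> {poly C})
  (l : seq nat) :
  lsh (foldr (@ladd C) (lzero C) [seq lmul (zeta i) (lpoly (u i)) | i <- l])
    = \sum_(i <- l) lsh (zeta i) /\
  lp (foldr (@ladd C) (lzero C) [seq lmul (zeta i) (lpoly (u i)) | i <- l])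
    = \sum_(i <- l) lp (zeta i) * u i * 'X^(\sum_(j <- l) lsh (zeta j) - lsh (zeta i)).
Proof.
elim: l => [|a l [IH1 IH2]] /=; first by rewrite !big_nil.
rewrite /ladd /lmul /lpoly /= in IH1 IH2 *.
rewrite IH1 IH2 !big_cons addn0; split => //.
rewrite addKn mulr_suml; congr (_ + _); apply: eq_big_seq => i hi.
have E : forall x y z : nat, (z <= y)%N -> ((x + y)%R - z = (y - z) + x)%N.
  by move=> x y z hz; rewrite -[(x + y)%R]/(x + y)%N; lia.
by rewrite E ?exprD ?mulrA //; exact: mem_le_sum.
Qed.

Definition Sz {C : fieldType} (m : nat) (zeta : nat -> laurent C) : nat :=
  \sum_(i <- iota 1 m.-1) lsh (zeta i).
Definition Pz {C : fieldType} (m : nat) (zeta : nat -> laurent C) (w : nat -> {poly C}) :=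
  \sum_(i <- iota 1 m.-1) lp (zeta i) * w i * 'X^(Sz m zeta - lsh (zeta i)).

Definition pcond {R : realType} (N m : nat) (zeta : nat -> laurent R[i])
   (w : nat -> {poly R[i]}) : Prop :=
 (forall i, (1 <= i <= m)%N -> (size (w i) <= N.+1)%N) /\
 (forall i, (1 <= i < m)%N -> 'X^(lsh (zeta i) + N) %|
      lp (zeta i) * w m * 'X^N - revN N (w i) * 'X^(lsh (zeta i))) /\
 ('X^(Sz m zeta + N) %| Pz m zeta w * 'X^N + revN N (w m) * 'X^(Sz m zeta)).

Lemma predn_le {n N : nat} : (n <= N.+1)%N -> ((n.-1) + (N - n.-1) = N)%N.
Proof. case: n => [|n] /=; lia. Qed.

Lemma sol_pcond {R : realType} (F : {pred R[i]}) N m zeta u :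
  (0 < m)%N -> is_solution (@conjc R) F N m zeta u -> pcond N m zeta u.
Proof.
move=> hm [H0 [H1 H2]]; split; first by move=> i /H0 [].
split.
  move=> i hi; have hs : (size (u i) <= N.+1)%N by case: (H0 i); first lia.
  have := Pplus_dvd (H1 i hi).
  rewrite /lsub /ladd /lopp /lmul /= => hd.
  have := dvdp_mul hd (dvdpp ('X^(N - (size (u i)).-1))).
  rewrite -(tilde_rev hs) addn0.
  move: hs; set d := (size (u i)).-1 => hs.
  have hdN : (d + (N - d) = N)%N := predn_le hs.
  rewrite -exprD -addnA hdN.
  set A := lp (ltilde _ _).
  have -> : (lp (zeta i) * u m * 'X^d + - A * 'X^(lsh (zeta i))) * 'X^(N - d)
     = lp (zeta i) * u m * ('X^d * 'X^(N - d)) - A * 'X^(N - d) * 'X^(lsh (zeta i)).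
    by ring.
  by rewrite -exprD hdN.
have hs : (size (u m) <= N.+1)%N by case: (H0 m); first by rewrite hm leqnn.
have := Pplus_dvd H2.
rewrite /ladd /=.
have [-> ->] := foldr_lap zeta u (iota 1 m.-1) => hd.
have := dvdp_mul hd (dvdpp ('X^(N - (size (u m)).-1))).
rewrite -(tilde_rev hs) -/(Sz m zeta) -/(Pz m zeta u).
move: hs; set d := (size (u m)).-1 => hs.
have hdN : (d + (N - d) = N)%N := predn_le hs.
rewrite -exprD -addnA hdN.
set A := lp (ltilde _ _); set P := Pz _ _ _; set S := Sz _ _.
have -> : (P * 'X^d + A * 'X^S) * 'X^(N - d) =
   P * ('X^d * 'X^(N - d)) + A * 'X^(N - d) * 'X^S.
  by ring.
by rewrite -exprD hdN.
Qed.

Lemma revN_sub {R : realType} N (p q : {poly R[i]}) :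
  revN N (p - q) = revN N p - revN N q.
Proof.
rewrite /revN -sumrB; apply: eq_bigr => b _.
by rewrite coefB rmorphB scalerBl.
Qed.

Lemma pcond_sub {R : realType} N m zeta (u v : nat -> {poly R[i]}) :
  pcond N m zeta u -> pcond N m zeta v -> pcond N m zeta (fun i => u i - v i).
Proof.
move=> [Su [U1 U2]] [Sv [V1 V2]]; split.
  move=> i hi; apply: leq_trans (size_add _ _) _.
  by rewrite size_opp geq_max Su ?Sv.
split.
  move=> i hi; rewrite !revN_sub.
  have := dvdp_sub (U1 i hi) (V1 i hi).
  set a := lp _; set b := 'X^N; set c := 'X^(lsh (zeta i)).
  by have -> : a * (u m - v m) * b - (revN N (u i) - revN N (v i)) * c =
    a * u m * b - revN N (u i) * c - (a * v m * b - revN N (v i) * c) by ring.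
have := dvdp_sub U2 V2; rewrite revN_sub.
have -> : Pz m zeta (fun i => u i - v i) = Pz m zeta u - Pz m zeta v.
  by rewrite /Pz -sumrB; apply: eq_bigr => i _; ring.
set a := 'X^N; set c := 'X^(Sz m zeta).
by have -> : (Pz m zeta u - Pz m zeta v) * a + (revN N (u m) - revN N (v m)) * c =
  Pz m zeta u * a + revN N (u m) * c - (Pz m zeta v * a + revN N (v m) * c) by ring.
Qed.

Lemma coef_wrev {R : realType} (N : nat) (p : {poly R[i]}) (n : nat) :
  (size p <= N.+1)%N ->
  (p * revN N p)`_n = \sum_(a < N.+1) \sum_(b < N.+1)
      p`_a * conjc p`_b * ((a + (N - b))%N == n)%:R.
Proof.
move=> hp; rewrite {1}(@poly_expand _ p _ hp) /revN mulr_suml coef_sum.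
apply: eq_bigr => a _; rewrite mulr_sumr coef_sum; apply: eq_bigr => b _.
by rewrite -scalerAl -scalerAr !coefZ -exprD coefXn mulrA eq_sym.
Qed.

Definition cT {R : realType} (N : nat) (l : seq nat) (w : nat -> {poly R[i]}) (n : nat) :=
  \sum_(i <- l) \sum_(a < N.+1) \sum_(b < N.+1)
      (w i)`_a * conjc (w i)`_b * ((a + (N - b))%N == n)%:R.

Lemma cT_sym {R : realType} N l (w : nat -> {poly R[i]}) n :
  (n <= N.*2)%N -> cT N l w (N.*2 - n) = conjc (cT N l w n).
Proof.
move=> hn; rewrite /cT rmorph_sum; apply: eq_bigr => i _.
rewrite rmorph_sum exchange_big; apply: eq_bigr => a _.
rewrite rmorph_sum; apply: eq_bigr => b _.
rewrite !rmorphM /= conjcK conjc_nat.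
rewrite (_ : ((b + (N - a))%N == (N.*2 - n)%N) = ((a + (N - b))%N == n)); first ring.
move: a b => [a ha] [b hb] /=.
by apply/idP/idP => /eqP h; apply/eqP; rewrite -addnn in hn h *; lia.
Qed.

Lemma psum_seq_eq0 {R' : numDomainType} (l : seq nat) (F : nat -> R') :
  (forall i, 0 <= F i) -> \sum_(i <- l) F i = 0 -> forall i, i \in l -> F i = 0.
Proof.
move=> hF; elim: l => // a l IH; rewrite big_cons => /eqP.
rewrite paddr_eq0 ?sumr_ge0 // => /andP [/eqP h1 /eqP h2] i.
by rewrite in_cons => /orP [/eqP -> // | /IH]; apply.
Qed.

Lemma core {R : realType} N m zeta (w : nat -> {poly R[i]}) :
  (2 <= m)%N -> pcond N m zeta w ->
  (forall i, (1 <= i <= m)%N -> (w i).[1] = 0) ->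
  forall i, (1 <= i <= m)%N -> w i = 0.
Proof.
move=> hm [S [H1 H2]] H1v.
set l := iota 1 m.-1.
have hl : iota 1 m = l ++ [:: m].
  have hm1 : m = (m.-1 + 1)%N by lia.
  by rewrite /l {1}hm1 iotaD /= addnC -hm1.
have memlI : forall i, i \in l -> (1 <= i < m)%N.
  by move=> i; rewrite mem_iota; lia.
set T := \sum_(i <- iota 1 m) w i * revN N (w i).
set Ssum := Sz m zeta.
have hTX : 'X^N %| T.
  have hX : 'X^Ssum != 0 :> {poly R[i]} by apply: monic_neq0; apply: monicXn.
  rewrite -(dvdp_mul2r _ _ hX) -exprD.
  have h1 : 'X^(N + Ssum) %| \sum_(i <- l) (lp (zeta i) * w m * 'X^N -
       revN N (w i) * 'X^(lsh (zeta i))) * (w i * 'X^(Ssum - lsh (zeta i))).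
    rewrite big_seq; apply: (big_ind (fun p => 'X^(N + Ssum) %| p)); [exact: dvdp0 | exact: dvdp_add |].
    move=> i hi; have hle : (lsh (zeta i) <= Ssum)%N := @mem_le_sum l (fun j => lsh (zeta j)) i hi.
    rewrite (_ : (N + Ssum = (lsh (zeta i) + N) + (Ssum - lsh (zeta i)))%N); last lia.
    rewrite exprD; apply: dvdp_mul; first exact: H1 (memlI i hi).
    exact: dvdp_mull.
  have h2 := dvdp_mull (w m) H2.
  have E : \sum_(i <- l) (lp (zeta i) * w m * 'X^N -
       revN N (w i) * 'X^(lsh (zeta i))) * (w i * 'X^(Ssum - lsh (zeta i)))
     = w m * 'X^N * Pz m zeta w - (\sum_(i <- l) w i * revN N (w i)) * 'X^Ssum.
    rewrite /Pz -/Ssum -/l mulr_sumr mulr_suml -sumrB; apply: eq_big_seq => i hi.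
    have hle : (lsh (zeta i) <= Ssum)%N := @mem_le_sum l (fun j => lsh (zeta j)) i hi.
    rewrite -{3}(subnKC hle) exprD; ring.
  have -> : T * 'X^Ssum = w m * (Pz m zeta w * 'X^N + revN N (w m) * 'X^(Sz m zeta))
     - \sum_(i <- l) (lp (zeta i) * w m * 'X^N -
       revN N (w i) * 'X^(lsh (zeta i))) * (w i * 'X^(Ssum - lsh (zeta i))).
    rewrite E /T hl big_cat /= big_seq1 -/Ssum; ring.
  apply: dvdp_sub => //; rewrite addnC; exact: h2.
have hT0 : forall n, (n < N)%N -> T`_n = 0.
  by move=> n hn; rewrite -(divpK hTX) coefMXn hn.
have hTc : forall n, T`_n = cT N (iota 1 m) w n.
  move=> n; rewrite /T coef_sum /cT; apply: eq_big_seq => i hi.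
  apply: coef_wrev; apply: S; move: hi; rewrite mem_iota; lia.
have hTbig : forall n, (N < n)%N -> T`_n = 0.
  move=> n hn; case: (leqP n N.*2) => h.
    rewrite hTc -(subKn h) cT_sym ?leq_subr // -hTc hT0 ?conjc0 //.
    by rewrite -addnn in h *; lia.
  rewrite hTc /cT big1_seq // => i _; rewrite big1 // => a _; rewrite big1 // => b _.
  rewrite (_ : (_ == n) = false) ?mulr0 //; apply/negbTE; apply/eqP.
  move: a b => [a ha] [b hb] /=; rewrite -addnn in h; lia.
have hTeq : T = T`_N *: 'X^N.
  apply/polyP => n; rewrite coefZ coefXn.
  case: (ltngtP n N) => h; first by rewrite hT0 // mulr0.
    by rewrite hTbig // mulr0.
  by rewrite h mulr1.
have hT1 : T.[1] = 0.
  rewrite /T horner_sum big1_seq // => i; rewrite andTb mem_iota => hi.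
  by rewrite hornerM H1v ?mul0r //; lia.
have hTN : T`_N = 0.
  by move: hT1; rewrite {1}hTeq hornerZ hornerXn expr1n mulr1.
have hTN' : T`_N = \sum_(i <- iota 1 m) \sum_(a < N.+1) (w i)`_a * conjc (w i)`_a.
  rewrite hTc /cT; apply: eq_bigr => i _; apply: eq_bigr => a _.
  rewrite (bigD1 a) //= big1 ?addr0.
    rewrite (_ : (a + (N - a) == N)%N) ?mulr1 //; apply/eqP.
    by move: a => [a ha] /=; lia.
  move=> b hb; rewrite (_ : (_ == N) = false) ?mulr0 //.
  apply/negbTE; move: a b hb => [a ha] [b hb] hab /=; apply/eqP => h.
  move/eqP: hab; apply; apply/val_inj => /=; lia.
move=> i hi; have hiin : i \in iota 1 m by rewrite mem_iota; lia.
have hzi : \sum_(a < N.+1) (w i)`_a * conjc (w i)`_a = 0.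
  apply: (@psum_seq_eq0 _ (iota 1 m) (fun i => \sum_(a < N.+1) (w i)`_a * conjc (w i)`_a) _ _ i hiin).
    by move=> j; apply: sumr_ge0 => a _; apply: mulcJ_ge0.
  by rewrite -hTN' hTN.
have hc : forall a : 'I_N.+1, (w i)`_a = 0.
  move=> a; have := @psumr_eq0P _ _ predT (fun a : 'I_N.+1 => (w i)`_a * conjc (w i)`_a)
     (fun a _ => mulcJ_ge0 _) hzi a isT.
  move=> /eqP; rewrite mulf_eq0 conjc_eq0.
  by case/orP => /eqP.
apply/polyP => k; rewrite coef0; case: (ltnP k N.+1) => hk.
  exact: (hc (Ordinal hk)).
by rewrite nth_default //; apply: leq_trans hk; apply: S.
Qed.


Lemma solvec_entry {R : realType} {F : {pred R[i]}} {N m zeta u i}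
  (hk : (i.-1 < m)%N) :
  is_solution (@conjc R) F N m zeta u -> (1 <= i <= m)%N ->
  solvec (@conjc R) m u 1 (Ordinal hk) 0 =
    if (i < m)%N then (u i).[1] else conjc (u m).[1].
Proof.
move=> [H0 _] hi; rewrite mxE /=.
rewrite prednK; last lia.
case: ifP => // _; apply: leval_tilde1.
by case: (H0 m); first lia.
Qed.

Theorem corollary1 (R : realType) (F : {pred R[i]})
    (hF : divring_closed F) (hconj : {in F, forall x, conjc x \in F})
    (m N : nat) (hm : (2 <= m)%N) (hN : (1 <= N)%N)
    (zeta : nat -> laurent R[i])
    (hzeta : forall i, (1 <= i < m)%N -> in_PNminus F N (zeta i)) :
  (forall u v : nat -> {poly R[i]},
     is_solution (@conjc R) F N m zeta u ->
     is_solution (@conjc R) F N m zeta v ->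
     solvec (@conjc R) m u 1 = solvec (@conjc R) m v 1 ->
     forall z : R[i], z != 0 -> solvec (@conjc R) m u z = solvec (@conjc R) m v z)
  /\
  (forall u : nat -> {poly R[i]},
     is_solution (@conjc R) F N m zeta u ->
     solvec (@conjc R) m u 1 = 0 ->
     forall z : R[i], z != 0 -> solvec (@conjc R) m u z = 0).
Proof.
have hm0 : (0 < m)%N by lia.
split.
  move=> u v Hu Hv Hs z _.
  have hw := @core _ N m zeta (fun j => u j - v j) hm
       (@pcond_sub _ N m zeta u v (sol_pcond _ _ _ _ _ hm0 Hu) (sol_pcond _ _ _ _ _ hm0 Hv)).
  have hv : forall j, (1 <= j <= m)%N -> (u j - v j).[1] = 0.
    move=> j hj; have hk : (j.-1 < m)%N by lia.
    have := congr1 (fun M : 'cV[R[i]]_m => M (Ordinal hk) 0) Hs.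
    rewrite /= (solvec_entry hk Hu hj) (solvec_entry hk Hv hj).
    rewrite hornerD hornerN; case: ifP => hjm; first by move=> ->; rewrite subrr.
    have -> : j = m by move/negbT: hjm; rewrite -leqNgt; lia.
    by move=> /(can_inj (@conjcK R)) ->; rewrite subrr.
  have heq : forall i, (1 <= i <= m)%N -> u i = v i.
    move=> i hi; apply/eqP; rewrite -subr_eq0; apply/eqP.
    exact: (hw hv i hi).
  apply/matrixP => i j; rewrite !mxE; case: ifP => h.
    by rewrite heq //; have := ltn_ord i; lia.
  by rewrite heq // hm0 leqnn.
move=> u Hu Hs z _.
have heq : forall i, (1 <= i <= m)%N -> u i = 0.
  apply: (@core _ N m zeta u hm (sol_pcond _ _ _ _ _ hm0 Hu)).
  move=> j hj; have hk : (j.-1 < m)%N by lia.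
    have := congr1 (fun M : 'cV[R[i]]_m => M (Ordinal hk) 0) Hs.
  rewrite /= (solvec_entry hk Hu hj) mxE.
  case: ifP => // hjm /eqP; rewrite conjc_eq0 => /eqP.
  by have -> : j = m by move/negbT: hjm; rewrite -leqNgt; lia.
apply/matrixP => i j; rewrite !mxE; case: ifP => h.
  by rewrite heq ?horner0 //; have := ltn_ord i; lia.
rewrite heq ?hm0 ?leqnn //.
by rewrite /leval /ltilde /= size_poly0 poly_def big_ord0 mul0r horner0 mul0r.
Qed.
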